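(* Let $\phi_*\in(0,\pi/2)$, $R\ge r=1$, and consider the billiard map on $Q(\phi_*,R)$. Let $x\in M_r$ with $n_1=0$ (exactly one reflection on $\Gamma_R$ between $x_0$ and $x_2$), and let $\tau_0=|p(x_0)p(x_1)|$, $\tau_1=|p(x_1)p(x_2)|$. If $$\frac{2}{d_1}<\frac1{\tau_0}+\frac1{\tau_1},$$ then the orbit segment $(x_0,x_1,x_2)$ is negatively defocusing.
   Context: Setting: $r=1$, $Q(\phi_*,R)=D(O_r,r)\cap D(O_R,R)$ with $|O_rO_R|=\sqrt{R^2-r^2\sin^2\phi_*}-r\cos\phi_*$; its boundary consists of $\Gamma_r$ (a major arc of $\partial D(O_r,r)$, position angles $[\phi_*,2\pi-\phi_*]$) and $\Gamma_R\subset\partial D(O_R,R)$. Phase space $M=M_r\sqcup M_R$, coordinates $(\phi,\theta)$ with $\theta\in(0,\pi)$ the angle from the positive tangent direction; $p(x)$ the base point; $F$ the billiard map. $M_r^{out}=M_r\cap F^{-1}(M_R)$, $M_R^{out}=M_R\cap F^{-1}(M_r)$. For $x\in M_r$: $x_0=F^{n_0}x$ with $n_0=\inf\{n\ge0:F^nx\in M_r^{out}\}$, $x_1=Fx_0$, $n_1=\inf\{n\ge0:F^nx_1\in M_R^{out}\}$, $x_2=F^{n_1+1}x_1$; $d_0=r\sin\theta(x_0)$, $d_1=R\sin\theta(x_1)$, $d_2=r\sin\theta(x_2)$. Derivative: $D_xF=\frac1{d(Fx)}\begin{bmatrix}\tau-d(x)&\tau\\ \tau-d(x)-d(Fx)&\tau-d(Fx)\end{bmatrix}$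 with $d(x)=\rho\sin\theta$ ($\rho$ the radius of the arc of $p(x)$), $\tau=|p(x)p(Fx)|$. A segment $(F^kx)_{m\le k\le n}$ is negatively defocusing if all four entries of $D_{F^mx}F^{n-m}$ in $(\phi,\theta)$ coordinates are negative. *)

(* Defs.v *)
From Stdlib Require Import Reals Lra List.
Open Scope R_scope.
Import ListNotations.

(** * The table Q(phi_star, R) with r = 1.
    O_r = (0,0); O_R = (-|O_rO_R|, 0), so that the two circles meet at the
    corners (cos phi_star, +- sin phi_star).  Gamma_r is the arc of the unit circle
    with position angles in [phi_star, 2 pi - phi_star] (points with abscissa
    <= cos phi_star), Gamma_R the arc of the big circle with abscissa >= cos phi_star. *)

Definition pt := (R * R)%type.

Definition dist (P Q : pt) : R :=
  sqrt ((fst P - fst Q) ^ 2 + (snd P - snd Q) ^ 2).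

Definition dOO (phis RR : R) : R := sqrt (RR ^ 2 - (sin phis) ^ 2) - cos phis.

Definition O_r : pt := (0, 0).
Definition O_R (phis RR : R) : pt := (- dOO phis RR, 0).

Inductive side := Sr | SR.

Record phase := mkPhase { side_of : side; phi : R; theta : R }.

Definition rad (RR : R) (s : side) : R := match s with Sr => 1 | SR => RR end.
Definition center (phis RR : R) (s : side) : pt :=
  match s with Sr => O_r | SR => O_R phis RR end.

Definition base (phis RR : R) (x : phase) : pt :=
  let C := center phis RR (side_of x) in
  let rho := rad RR (side_of x) in
  (fst C + rho * cos (phi x), snd C + rho * sin (phi x)).

Definition InM (phis RR : R) (x : phase) : Prop :=
  0 < theta x < PI /\
  match side_of x with
  | Sr => phis <= phi x <= 2 * PI - phis
  | SR => - PI < phi x <= PI /\ cos phis <= fst (base phis RR x)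
  end.

Definition InMr phis RR x := InM phis RR x /\ side_of x = Sr.
Definition InMR phis RR x := InM phis RR x /\ side_of x = SR.

(** outgoing unit velocity: angle theta from the positive (counterclockwise)
    tangent direction, pointing into the table *)
Definition vel (x : phase) : pt :=
  (cos (theta x) * (- sin (phi x)) + sin (theta x) * (- cos (phi x)),
   cos (theta x) * cos (phi x) + sin (theta x) * (- sin (phi x))).

Definition inQint (phis RR : R) (P : pt) : Prop :=
  dist P O_r < 1 /\ dist P (O_R phis RR) < RR.

Definition corner (phis : R) (P : pt) : Prop :=
  P = (cos phis, sin phis) \/ P = (cos phis, - sin phis).

Definition dot (u v : pt) : R := fst u * fst v + snd u * snd v.

(** The billiard map as a relation: [Fstep x y] means F x = y. *)
Definition Fstep (phis RR : R) (x y : phase) : Prop :=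
  InM phis RR x /\ InM phis RR y /\
  exists t : R, 0 < t /\
    base phis RR y = (fst (base phis RR x) + t * fst (vel x),
                      snd (base phis RR x) + t * snd (vel x)) /\
    (forall s, 0 < s < t ->
       inQint phis RR (fst (base phis RR x) + s * fst (vel x),
                       snd (base phis RR x) + s * snd (vel x))) /\
    ~ corner phis (base phis RR y) /\
    (let n := (cos (phi y), sin (phi y)) in
     let u := vel x in
     vel y = (fst u - 2 * dot u n * fst n, snd u - 2 * dot u n * snd n)).

Inductive Fiter (phis RR : R) : nat -> phase -> phase -> Prop :=
| Fiter0 x : Fiter phis RR 0 x x
| FiterS n x y z : Fstep phis RR x y -> Fiter phis RR n y z ->
                   Fiter phis RR (S n) x z.

Definition InMr_out phis RR x :=
  InMr phis RR x /\ exists y, Fstep phis RR x y /\ side_of y = SR.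
Definition InMR_out phis RR x :=
  InMR phis RR x /\ exists y, Fstep phis RR x y /\ side_of y = Sr.

Definition dd (RR : R) (x : phase) : R := rad RR (side_of x) * sin (theta x).
Definition tau (phis RR : R) (x y : phase) : R := dist (base phis RR x) (base phis RR y).

Record mat2 := Mat2 { m11 : R; m12 : R; m21 : R; m22 : R }.

Definition mmul (A B : mat2) : mat2 :=
  Mat2 (m11 A * m11 B + m12 A * m21 B) (m11 A * m12 B + m12 A * m22 B)
       (m21 A * m11 B + m22 A * m21 B) (m21 A * m12 B + m22 A * m22 B).

(** D_x F in (phi, theta) coordinates, for y = F x (formula from the context) *)
Definition DF (phis RR : R) (x y : phase) : mat2 :=
  let t := tau phis RR x y in
  let dx := dd RR x in
  let dy := dd RR y in
  Mat2 ((t - dx) / dy) (t / dy) ((t - dx - dy) / dy) ((t - dy) / dy).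

Fixpoint DFseg (phis RR : R) (x : phase) (l : list phase) : mat2 :=
  match l with
  | nil => Mat2 1 0 0 1
  | y :: l' => mmul (DFseg phis RR y l') (DF phis RR x y)
  end.

Definition negative_mat (A : mat2) : Prop :=
  m11 A < 0 /\ m12 A < 0 /\ m21 A < 0 /\ m22 A < 0.

Definition neg_defocusing (phis RR : R) (x : phase) (l : list phase) : Prop :=
  negative_mat (DFseg phis RR x l).

(* Main.v *)
Require Import Defs.
From Stdlib Require Import Reals List Lra Psatz.
Open Scope R_scope.

Lemma N_neg a b d0 d1 d2 : 0<a -> 0<b -> 0<d0 -> 0<d1 -> 0<d2 ->
  2*a*b < d1*(a+b) -> 0 < (a-d0)+(b-d2) ->
  2*(a-d0)*b - d1*((a-d0)+b) < 0 /\ 2*a*(b-d2) - d1*(a+(b-d2)) < 0 /\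
  2*(a-d0)*(b-d2) - d1*((a-d0)+(b-d2)) < 0.
Proof.
  intros. set (s:=a-d0) in *. set (g:=b-d2) in *.
  assert (s < a) by (unfold s; lra). assert (g < b) by (unfold g; lra).
  split; [|split].
  - destruct (Rle_lt_dec d1 (2*b)).
    + nra.
    + destruct (Rle_lt_dec 0 s). nra. nra.
  - destruct (Rle_lt_dec d1 (2*a)).
    + nra.
    + destruct (Rle_lt_dec 0 g). nra. nra.
  - destruct (Rle_lt_dec 0 s); destruct (Rle_lt_dec 0 g); try nra; [idtac].
    set (P1 := s*g*(d1*(a+b) - 2*a*b)).
    set (P2 := d1*(s*a*(b-g))). set (P3 := d1*(g*b*(a-s))).
    assert (H9: 0 <= P1) by (unfold P1; repeat apply Rmult_le_pos; lra).
    assert (H10: 0 <= P2) by (unfold P2; repeat apply Rmult_le_pos; lra).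
    assert (H10': 0 <= P3) by (unfold P3; repeat apply Rmult_le_pos; lra).
    assert (E: a*b*(d1*(s+g) - 2*s*g) = P1 + P2 + P3) by (unfold P1, P2, P3; ring).
    assert (H11: 0 < P1 + P2 + P3).
    { destruct (Rlt_or_le 0 s).
      - assert (0 < P2) by (unfold P2; repeat apply Rmult_lt_0_compat; lra). lra.
      - assert (0 < g) by lra.
        assert (0 < P3) by (unfold P3; repeat apply Rmult_lt_0_compat; lra). lra. }
    rewrite <- E in H11.
    assert (0 < a*b) by (apply Rmult_lt_0_compat; lra).
    assert (0 < d1*(s+g) - 2*s*g).
    { destruct (Rlt_or_le 0 (d1*(s+g) - 2*s*g)); auto.
      assert (a*b*(d1*(s+g) - 2*s*g) <= 0). { replace (a*b*(d1*(s+g) - 2*s*g)) with (- (a*b*(-(d1*(s+g) - 2*s*g)))) by ring. assert (0 <= a*b*(-(d1*(s+g) - 2*s*g))) by (apply Rmult_le_pos; lra). lra. } lra. }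
    lra.
Qed.

Lemma key (c0 s0 st0 u1x u1y a c1 s1 st1 p1x p1y u2x u2y b c2 s2 st2 u3x u3y : R) :
  u1x^2+u1y^2 = 1 -> u1x*c0 + u1y*s0 = -st0 ->
  c1^2+s1^2 = 1 -> p1x = c0 + a*u1x -> p1y = s0 + a*u1y ->
  u2x = u1x - 2*(u1x*c1+u1y*s1)*c1 -> u2y = u1y - 2*(u1x*c1+u1y*s1)*s1 ->
  u2x*c1 + u2y*s1 = -st1 ->
  c2 = p1x + b*u2x -> s2 = p1y + b*u2y ->
  c2^2+s2^2 = 1 ->
  u3x = u2x - 2*(u2x*c2+u2y*s2)*c2 -> u3y = u2y - 2*(u2x*c2+u2y*s2)*s2 ->
  u3x*c2 + u3y*s2 = -st2 ->
  (a - st0) + (b - st2) = 2*st1*(p1x*c1+p1y*s1).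
Proof.
  intros Hu1 Hd0 Hn1 Hp1x Hp1y Hu2x Hu2y Hd1 Hc2 Hs2 Hn2 Hu3x Hu3y Hd2.
  assert (Hk: u1x*c1+u1y*s1 = st1).
  { assert (E: u2x*c1+u2y*s1 = (u1x*c1+u1y*s1) - 2*(u1x*c1+u1y*s1)*(c1^2+s1^2)) by (rewrite Hu2x, Hu2y; ring).
    rewrite Hn1 in E. lra. }
  assert (Hk2: u2x*c2+u2y*s2 = st2).
  { assert (E: u3x*c2+u3y*s2 = (u2x*c2+u2y*s2) - 2*(u2x*c2+u2y*s2)*(c2^2+s2^2)) by (rewrite Hu3x, Hu3y; ring).
    rewrite Hn2 in E. lra. }
  assert (Hu2: u2x^2+u2y^2 = 1).
  { assert (E: u2x^2+u2y^2 = u1x^2+u1y^2 - 4*(u1x*c1+u1y*s1)^2 + 4*(u1x*c1+u1y*s1)^2*(c1^2+s1^2)) by (rewrite Hu2x, Hu2y; ring).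
    rewrite Hn1, Hu1 in E. lra. }
  assert (A1: a - st0 = u1x*p1x + u1y*p1y).
  { assert (E: u1x*p1x + u1y*p1y = (u1x*c0+u1y*s0) + a*(u1x^2+u1y^2)) by (rewrite Hp1x, Hp1y; ring).
    rewrite Hu1, Hd0 in E. lra. }
  assert (A2: b - st2 = -(u2x*p1x + u2y*p1y)).
  { assert (E: u2x*c2+u2y*s2 = (u2x*p1x + u2y*p1y) + b*(u2x^2+u2y^2)) by (rewrite Hc2, Hs2; ring).
    rewrite Hu2, Hk2 in E. lra. }
  assert (A3: u1x*p1x + u1y*p1y - (u2x*p1x + u2y*p1y) = 2*(u1x*c1+u1y*s1)*(p1x*c1+p1y*s1)) by (rewrite Hu2x, Hu2y; ring).
  rewrite Hk in A3. lra.
Qed.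

Lemma trig1 f : cos f ^ 2 + sin f ^ 2 = 1.
Proof. pose proof (sin2_cos2 f) as H. unfold Rsqr in H. lra. Qed.

Lemma vel_unit' t f :
  (cos t * - sin f + sin t * - cos f) ^ 2 + (cos t * cos f + sin t * - sin f) ^ 2 = 1.
Proof.
  replace ((cos t * - sin f + sin t * - cos f) ^ 2 + (cos t * cos f + sin t * - sin f) ^ 2)
    with ((cos t ^ 2 + sin t ^ 2) * (cos f ^ 2 + sin f ^ 2)) by ring.
  rewrite !trig1. ring.
Qed.

Lemma vel_dot' t f :
  (cos t * - sin f + sin t * - cos f) * cos f + (cos t * cos f + sin t * - sin f) * sin f = - sin t.
Proof.
  replace ((cos t * - sin f + sin t * - cos f) * cos f + (cos t * cos f + sin t * - sin f) * sin f)
    with (- sin t * (cos f ^ 2 + sin f ^ 2)) by ring.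
  rewrite trig1. ring.
Qed.

Lemma dist_step px py ux uy a : ux ^ 2 + uy ^ 2 = 1 -> 0 <= a ->
  Defs.dist (px, py) (px + a * ux, py + a * uy) = a.
Proof.
  intros Hu Ha. unfold Defs.dist; cbn [fst snd].
  replace ((px - (px + a * ux)) ^ 2 + (py - (py + a * uy)) ^ 2) with (a ^ 2 * (ux ^ 2 + uy ^ 2)) by ring.
  rewrite Hu, Rmult_1_r. apply sqrt_pow2; lra.
Qed.

Lemma neg_div N p x : x = N / p -> N < 0 -> 0 < p -> x < 0.
Proof.
  intros -> HN Hp. unfold Rdiv.
  assert (0 < / p) by (apply Rinv_0_lt_compat; lra). nra.
Qed.

Theorem mainTheorem7 (phis RR : R) (x x0 x1 x2 : phase) (n0 : nat) :
  0 < phis < PI / 2 -> 1 <= RR ->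
  InMr phis RR x ->
  Fiter phis RR n0 x x0 -> InMr_out phis RR x0 ->
  (forall (k : nat) (y : phase), (k < n0)%nat -> Fiter phis RR k x y ->
     ~ InMr_out phis RR y) ->
  Fstep phis RR x0 x1 ->
  InMR_out phis RR x1 ->
  Fstep phis RR x1 x2 -> side_of x2 = Sr ->
  2 / dd RR x1 < 1 / tau phis RR x0 x1 + 1 / tau phis RR x1 x2 ->
  neg_defocusing phis RR x0 (x1 :: x2 :: nil).
Proof.
  intros Hphi HR _ _ Hx0 _ Hs01 Hx1 Hs12 Hside2 Hcond.
  destruct Hx0 as [[HM0 Hside0] _].
  destruct Hx1 as [[HM1 Hside1] _].
  destruct Hs01 as [_ [_ [a [Ha [Hb1 [_ [_ Hv1]]]]]]].
  destruct Hs12 as [_ [HM2 [b [Hb [Hb2 [_ [_ Hv2]]]]]]].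
  destruct x0 as [sd0 f0 t0], x1 as [sd1 f1 t1], x2 as [sd2 f2 t2]; simpl in *; subst.
  unfold InM in *; simpl in *.
  unfold neg_defocusing, negative_mat, DFseg, DF, mmul, tau, dd in *; simpl in *.
  unfold vel, base, dot, O_R in *; simpl in *.
  assert (Ea : Defs.dist (0 + 1 * cos f0, 0 + 1 * sin f0)
      (- dOO phis RR + RR * cos f1, 0 + RR * sin f1) = a).
  { rewrite Hb1. apply dist_step. apply vel_unit'. lra. }
  assert (Eb : Defs.dist (- dOO phis RR + RR * cos f1, 0 + RR * sin f1)
      (0 + 1 * cos f2, 0 + 1 * sin f2) = b).
  { rewrite Hb2. apply dist_step. apply vel_unit'. lra. }
  rewrite Ea, Eb in *.
  injection Hb1 as H1x H1y. injection Hb2 as H2x H2y.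
  injection Hv1 as V1x V1y. injection Hv2 as V2x V2y.
  destruct HM0 as [[Ht0a Ht0b] _]. destruct HM1 as [[Ht1a Ht1b] _].
  destruct HM2 as [[Ht2a Ht2b] _].
  assert (Hst0 : 0 < sin t0) by (apply sin_gt_0; lra).
  assert (Hst1 : 0 < sin t1) by (apply sin_gt_0; lra).
  assert (Hst2 : 0 < sin t2) by (apply sin_gt_0; lra).
  pose proof PI_RGT_0 as HPI.
  assert (Hc : 0 < cos phis) by (apply cos_gt_0; lra).
  assert (HD : 0 <= dOO phis RR < RR).
  { unfold dOO. pose proof (trig1 phis) as T.
    assert (Harg : 0 <= RR ^ 2 - sin phis ^ 2) by nra.
    pose proof (sqrt_sqrt _ Harg) as Hq. pose proof (sqrt_pos (RR ^ 2 - sin phis ^ 2)) as Hq0.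
    set (q := sqrt (RR ^ 2 - sin phis ^ 2)) in *.
    split; nra. }
  assert (Hkey := key (cos f0) (sin f0) (sin t0) _ _ a (cos f1) (sin f1) (sin t1)
     (- dOO phis RR + RR * cos f1) (RR * sin f1) _ _ b (cos f2) (sin f2) (sin t2) _ _
     (vel_unit' t0 f0) (vel_dot' t0 f0) (trig1 f1) ltac:(lra) ltac:(lra)
     V1x V1y (vel_dot' t1 f1) ltac:(lra) ltac:(lra) (trig1 f2)
     V2x V2y (vel_dot' t2 f2)).
  assert (Hpos : 0 < (a - sin t0) + (b - sin t2)).
  { rewrite Hkey. pose proof (trig1 f1). pose proof (COS_bound f1).
    replace ((- dOO phis RR + RR * cos f1) * cos f1 + RR * sin f1 * sin f1)
      with (RR * (cos f1 ^ 2 + sin f1 ^ 2) - dOO phis RR * cos f1) by ring.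
    rewrite trig1.
    assert (0 <= dOO phis RR * (1 - cos f1)) by (apply Rmult_le_pos; lra).
    assert (0 < RR * 1 - dOO phis RR * cos f1) by lra.
    apply Rmult_lt_0_compat; lra. }
  assert (Hd1 : 0 < RR * sin t1) by nra.
  assert (Hc2 : 2 * a * b < RR * sin t1 * (a + b)).
  { pose proof (Rmult_lt_compat_r (a * b * (RR * sin t1)) _ _ ltac:(repeat apply Rmult_lt_0_compat; lra) Hcond) as H.
    replace (2 / (RR * sin t1) * (a * b * (RR * sin t1))) with (2 * a * b) in H by (field; lra).
    replace ((1 / a + 1 / b) * (a * b * (RR * sin t1))) with (RR * sin t1 * (a + b)) in H by (field; lra).
    exact H. }
  destruct (N_neg a b (sin t0) (RR * sin t1) (sin t2) Ha Hb Hst0 Hd1 Hst2 Hc2 Hpos) as [N1 [N2 N3]].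
  assert (Hp : 0 < RR * sin t1 * sin t2) by nra.
  split; [|split; [|split]].
  - eapply neg_div; [| exact N1 | exact Hp]. field. lra.
  - eapply neg_div; [| | exact Hp]. 2: { instantiate (1 := 2 * a * b - RR * sin t1 * (a + b)). lra. }
    field. lra.
  - eapply neg_div; [| exact N3 | exact Hp]. field. lra.
  - eapply neg_div; [| exact N2 | exact Hp]. field. lra.
Qed.
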